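(* Let $(X,Y)$ be a minimal divider of a matroid $N$. Then ${\rm cl}(X)\cap {\rm cl}(Y)={\rm cl}(X)\cap {\rm cl}(Y-{\rm cl}(X))$.
   Context: A partition $(X,Y)$ of $E(N)$ is a vertical $k$-separation if $r(X)+r(Y)-r(N)\leq k-1$ and $\min\{r(X),r(Y)\}\geq k$; it is exact if $r(X)+r(Y)-r(N)=k-1$. A divider of $N$ is an exact vertical $k$-separation for some $k$. A divider $(X,Y)$ is minimal if there is no vertical $k'$-separation $(X',Y')$ of $N$ (for any $k'$) with ${\rm cl}(X')\cap {\rm cl}(Y')\subsetneqq {\rm cl}(X)\cap {\rm cl}(Y)$. *)

(* Defs.v *)
From mathcomp Require Import all_boot.
Set Implicit Arguments. Unset Strict Implicit. Unset Printing Implicit Defensive.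

(* A matroid on the finite ground set T (E(N) = [set: T]) given by its rank function. *)
Record matroid (T : finType) := Matroid {
  rank :> {set T} -> nat;
  rank_le_card : forall A : {set T}, rank A <= #|A|;
  rank_mono : forall A B : {set T}, A \subset B -> rank A <= rank B;
  rank_submod : forall A B : {set T},
      rank (A :|: B) + rank (A :&: B) <= rank A + rank B
}.

Section Defs.
Variables (T : finType) (N : matroid T).

Definition cl (A : {set T}) : {set T} := [set e | N (e |: A) == N A].

Definition is_partition (X Y : {set T}) : Prop :=
  X :&: Y = set0 /\ X :|: Y = [set: T].

(* vertical k-separation: r(X)+r(Y)-r(N) <= k-1 and min(r X, r Y) >= k.
   Written without subtraction: r(X)+r(Y)+1 <= r(N)+k. *)
Definition vertical_sep (k : nat) (X Y : {set T}) : Prop :=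
  is_partition X Y /\ N X + N Y + 1 <= N [set: T] + k /\ k <= N X /\ k <= N Y.

Definition exact_vertical_sep (k : nat) (X Y : {set T}) : Prop :=
  vertical_sep k X Y /\ N X + N Y + 1 = N [set: T] + k.

Definition divider (X Y : {set T}) : Prop := exists k, exact_vertical_sep k X Y.

Definition minimal_divider (X Y : {set T}) : Prop :=
  divider X Y /\
  ~ (exists k' (X' Y' : {set T}), vertical_sep k' X' Y' /\
       (cl X' :&: cl Y') \proper (cl X :&: cl Y)).
End Defs.

(* Main.v *)
Require Import Defs.
From mathcomp Require Import all_boot.
From mathcomp Require Import zify.
Set Implicit Arguments.
Unset Strict Implicit.

Section Aux.
Variables (T : finType) (N : matroid T).

Lemma cl_step (A B : {set T}) e :
  A \subset B -> N (e |: A) = N A -> N (e |: B) = N B.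
Proof.
move=> hAB hA.
have := rank_submod N (e |: A) B.
have -> : (e |: A) :|: B = e |: B by rewrite -setUA (setUidPr hAB).
have : N A <= N ((e |: A) :&: B).
  by apply: rank_mono; rewrite subsetI subsetUr hAB.
have : N B <= N (e |: B) by apply: rank_mono; rewrite subsetUr.
lia.
Qed.

Lemma cl_sub (A : {set T}) : A \subset cl N A.
Proof.
apply/subsetP => x xA; rewrite /cl inE.
by rewrite (setUidPr _) // sub1set.
Qed.

Lemma rank_cl (A : {set T}) : N (cl N A) = N A.
Proof.
have H : forall s : seq T, {subset s <= cl N A} ->
    N (A :|: [set x in s]) = N A.
  elim=> [|e s IH] hs.
    have -> : [set x in [::]] = set0 :> {set T} by apply/setP=> x; rewrite !inE.
    by rewrite setU0.
  have -> : [set x in e :: s] = e |: [set x in s] by apply/setP=> x; rewrite !inE.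
  have IH' : N (A :|: [set x in s]) = N A.
    by apply: IH => x xs; apply: hs; rewrite inE xs orbT.
  rewrite setUCA (@cl_step A (A :|: [set x in s]) e) //.
    exact: subsetUl.
  by have := hs e (mem_head _ _); rewrite /cl inE => /eqP.
have -> : cl N A = A :|: [set x in enum (cl N A)].
  apply/setP => x; rewrite !inE mem_enum.
  case: (boolP (x \in A)) => xA /=; last by rewrite /cl inE.
  by have := subsetP (cl_sub A) x xA; rewrite /cl inE => ->.
apply: (H (enum (cl N A))) => x; by rewrite mem_enum.
Qed.

End Aux.

Theorem lemma4p2 (T : finType) (N : matroid T) (X Y : {set T}) :
  minimal_divider N X Y ->
  cl N X :&: cl N Y = cl N X :&: cl N (Y :\: cl N X).
Proof.
move=> [[k [[[hI hU] [h1 [h2 h3]]] hex]] hmin].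
set C := cl N X. set Y' := Y :\: C.
have XC : X \subset C by apply: cl_sub.
have clC : cl N C = C.
  apply/setP => e; rewrite /cl /C !inE rank_cl.
  apply/eqP/eqP => h.
    apply/eqP; rewrite eqn_leq; apply/andP; split.
      rewrite -h; apply: rank_mono; apply: setUS; exact: XC.
    by apply: rank_mono; rewrite subsetUr.
  by rewrite (cl_step XC h) rank_cl.
have hsub1 : cl N Y' \subset cl N Y.
  apply/subsetP => e; rewrite /cl !inE => /eqP h; apply/eqP.
  apply: cl_step h; exact: subsetDl.
have hpart : is_partition C Y'.
  split; apply/setP => x; rewrite !(in_setI, in_setU, in_setD, in_set0, in_setT).
    by case: (x \in C).
  case xC: (x \in C) => //=.
  have : x \in X :|: Y by rewrite hU inE.
  rewrite inE; case/orP => // xX.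
  by rewrite (subsetP XC _ xX) in xC.
have rC : N C = N X by rewrite /C rank_cl.
have rY' : N Y' <= N Y by apply: rank_mono; exact: subsetDl.
have rT : N [set: T] <= N C + N Y'.
  have := rank_submod N C Y'.
  by case: hpart => _ ->; lia.
set k' := N X + N Y' + 1 - N [set: T].
have hvs : vertical_sep N k' C Y'.
  split => //; rewrite rC; split; [|split]; rewrite /k'; lia.
have hs : cl N C :&: cl N Y' \subset cl N X :&: cl N Y.
  by rewrite clC setIS.
apply/eqP; rewrite eqEsubset; apply/andP; split; last by rewrite setIS.
case: (boolP (cl N X :&: cl N Y \subset cl N C :&: cl N Y')) => hn.
  by rewrite clC in hn.
exfalso; apply: hmin; exists k', C, Y'; split => //.
by rewrite properE hs hn.
Qed.
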